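(* Let $n\ge 2$ be an integer such that $C_n=n2^n+1$ is composite and $\phi(C_n)\mid C_n-1$. Let $k$ be the number of distinct prime factors of $C_n$. Then $k<1+2.4\log n$, where $\log$ is the natural logarithm.
   Context: $\phi$ denotes Euler's totient function, and $C_n=n2^n+1$. *)

(* Defs.v *)
From mathcomp Require Import all_boot.
From Stdlib Require Import Reals.

Definition cullen (n : nat) : nat := (n * 2 ^ n + 1)%N.

(* Main.v *)
Require Import Defs.
From mathcomp Require Import all_boot.
From Stdlib Require Import Reals.
From Stdlib Require Import Lra.

Section RealPart.
Local Open Scope R_scope.
Lemma exp_mul_nat (k : nat) (x : R) : exp (INR k * x) = exp x ^ k.
Proof.
induction k as [|k IH]; simpl.
- replace (0 * x) with 0 by ring. apply exp_0.
- rewrite <- IH, <- exp_plus. f_equal. destruct k; simpl; ring.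
Qed.

Lemma ln2_gt : 17/25 < ln 2.
Proof.
assert (H1 : exp (1/50) <= 50/49).
{ assert (h := exp_ineq1_le (-(1/50))).
  assert (h2 : exp (1/50) * exp (-(1/50)) = 1).
  { rewrite <- exp_plus. replace (1/50 + - (1/50)) with 0 by ring. apply exp_0. }
  assert (0 < exp (1/50)) by apply exp_pos. nra. }
assert (H2 : exp (17/25) <= (50/49)^34).
{ replace (17/25) with (INR 34 * (1/50)) by (simpl; field).
  rewrite exp_mul_nat. apply pow_incr. split; [left; apply exp_pos | exact H1]. }
assert (H3 : (50/49)^34 < 2).
{ assert (E : (50/49)^34 * 49^34 = 50^34).
  { rewrite <- Rpow_mult_distr. f_equal. field. }
  assert (Z : 50^34 < 2 * 49^34).
  { replace 50 with (IZR 50) by reflexivity. replace 49 with (IZR 49) by reflexivity.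
    rewrite !pow_IZR. rewrite <- mult_IZR. apply IZR_lt. reflexivity. }
  assert (0 < 49^34) by (apply pow_lt; lra). nra. }
rewrite <- (ln_exp (17/25)). apply ln_increasing. apply exp_pos. lra.
Qed.

Lemma ln3_gt : 19 * ln 2 < 12 * ln 3.
Proof.
replace 19 with (INR 19) by (simpl; ring). replace 12 with (INR 12) by (simpl; ring).
rewrite <- !ln_pow by lra. apply ln_increasing. apply pow_lt; lra.
replace 2 with (IZR 2) by reflexivity. replace 3 with (IZR 3) by reflexivity.
rewrite !pow_IZR. apply IZR_lt. reflexivity.
Qed.

Lemma ln_le' x y : 0 < x -> x <= y -> ln x <= ln y.
Proof. intros h [h1|h1]. left; apply ln_increasing; lra. subst; lra. Qed.

Lemma real_part (n r s : nat) : 2 <= INR n -> 2 ^ r <= 2 * INR n -> 3 ^ s <= INR n ->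
  INR (r + s) < 1 + (24/10) * ln (INR n).
Proof.
intros hn' hr hs.
set (L := ln (INR n)).
assert (ha := ln2_gt). assert (hb := ln3_gt).
assert (HL : ln 2 <= L) by (apply ln_le'; lra).
assert (Hr : INR r * ln 2 <= ln 2 + L).
{ rewrite <- ln_pow by lra. unfold L. rewrite <- ln_mult by lra.
  apply ln_le'. apply pow_lt; lra. exact hr. }
assert (Hs : INR s * ln 3 <= L).
{ rewrite <- ln_pow by lra. unfold L.
  apply ln_le'. apply pow_lt; lra. exact hs. }
rewrite plus_INR.
assert (0 <= INR r) by apply pos_INR. assert (0 <= INR s) by apply pos_INR.
assert (K : 19 * ln 2 * (INR r + INR s) <= 19 * ln 2 + 31 * L) by nra.
assert (K2 : 31 * L < 19 * ln 2 * (24/10) * L) by nra.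
assert (K3 : 19 * ln 2 * (INR r + INR s) < 19 * ln 2 * (1 + 24/10 * L)) by nra.
apply (Rmult_lt_reg_l (19 * ln 2)). lra. exact K3.
Qed.

Lemma INR_expn (m k : nat) : INR (expn m k) = INR m ^ k.
Proof.
induction k as [|k IH]. reflexivity.
rewrite expnS -multE mult_INR IH. simpl. ring.
Qed.

Lemma INR2 : INR 2 = 2. Proof. simpl; lra. Qed.
Lemma INR3 : INR 3 = 3. Proof. simpl; lra. Qed.

End RealPart.

Local Notation "m ^ n" := (expn m n) : nat_scope.
Lemma powE m k : Nat.pow m k = m ^ k.
Proof. elim: k => [|k IH] //=. by rewrite expnS IH multE. Qed.

Lemma cullenE n : cullen n = n * 2 ^ n + 1.
Proof. by rewrite /cullen powE. Qed.

Lemma odd_dvd x c : x.+1 %| x ^ c.*2.+1 + 1.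
Proof.
case: x => [|x]; first by rewrite dvd1n.
elim: c => [|c IH]; first by rewrite expn1 addn1.
have H1 : x.+2 %| x.+1 ^ 2 - 1 ^ 2 by rewrite subn_sqr dvdn_mull // addn1.
have H2 : x.+1 ^ (c.+1).*2.+1 + 1 = x.+1 ^ 2 * (x.+1 ^ c.*2.+1 + 1) - (x.+1 ^ 2 - 1 ^ 2).
  rewrite exp1n mulnDr muln1 -expnD subnBA ?expn_gt0 //.
  rewrite -addnA (addnC (_ ^ 2)) addnA addnK.
  by rewrite doubleS add2n.
rewrite H2; apply: dvdn_sub => //; exact: dvdn_mull.
Qed.

Lemma fermat_pow2 a : 0 < a -> prime (2 ^ a + 1) -> a = 2 ^ logn 2 a.
Proof.
move=> a0 pr.
have [m cm Ha] := pfactor_coprime (isT : prime 2) a0.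
rewrite coprime2n in cm.
set b := logn 2 a in Ha *.
set x := 2 ^ 2 ^ b.
have x1 : 1 < x by rewrite /x -{1}(expn0 2) ltn_exp2l // expn_gt0.
have Em : m = (m./2).*2.+1 by rewrite -{1}(odd_double_half m) cm.
have Hx : 2 ^ a = x ^ m by rewrite Ha mulnC expnM.
have D : x.+1 %| 2 ^ a + 1 by rewrite Hx Em odd_dvd.
have : x.+1 = 2 ^ a + 1.
  have ne : x.+1 != 1 by rewrite eqSS -lt0n ltnW.
  exact: (elimT (prime_nt_dvdP pr ne) D).
rewrite addn1 Hx => /eqP; rewrite eqSS -{1}(expn1 x) eqn_exp2l // => /eqP m1.
by rewrite Ha -m1 mul1n.
Qed.

Definition oddp x := x %/ 2 ^ logn 2 x.

Lemma oddpE x : 0 < x -> x = oddp x * 2 ^ logn 2 x /\ odd (oddp x).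
Proof.
move=> x0; have [m cm Hx] := pfactor_coprime (isT : prime 2) x0.
have -> : oddp x = m by rewrite /oddp {1}Hx mulnK ?expn_gt0.
by rewrite -coprime2n.
Qed.

Lemma prod3 (f : nat -> nat) (l : seq nat) :
  (forall x, x \in l -> odd (f x)) ->
  3 ^ count (fun x => f x != 1) l <= \prod_(x <- l) f x.
Proof.
elim: l => [|y l IH] H; first by rewrite big_nil.
rewrite big_cons /= expnD.
have Hy := H y (mem_head _ _).
have IH' : 3 ^ count (fun x => f x != 1) l <= \prod_(x <- l) f x.
  apply: IH => x xl; apply: H; by rewrite in_cons xl orbT.
apply: leq_mul => //.
case: eqP => [->|ne] //=.
rewrite expn1. case: (f y) Hy ne => [|[|[|k]]] //.
Qed.

Lemma sorted_sum (t : seq nat) m : all (fun y => m <= y) t -> sorted ltn t ->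
  2 ^ m * 2 ^ size t <= \sum_(y <- t) 2 ^ y + 2 ^ m.
Proof.
elim: t m => [|x t IH] m /=; first by rewrite big_nil muln1.
case/andP=> mx _ st.
have all1 : all (fun y => m.+1 <= y) t.
  have := order_path_min ltn_trans st. apply: sub_all => y /=. exact: leq_ltn_trans.
have := IH m.+1 all1 (path_sorted st).
move=> h.
have hx : 2 ^ m <= 2 ^ x by rewrite leq_exp2l.
have E1 : 2 ^ m * 2 ^ (size t).+1 = 2 ^ m.+1 * 2 ^ size t by rewrite -!expnD addSn addnS.
rewrite E1 big_cons; apply: (leq_trans h).
rewrite expnS mul2n -addnn addnA leq_add2r addnC leq_add2r //.
Qed.

Lemma uniq_sum (js : seq nat) : uniq js -> 2 ^ size js <= (\sum_(y <- js) 2 ^ y).+1.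
Proof.
move=> u.
have P : perm_eq (sort leq js) js by rewrite perm_sort perm_refl.
have st : sorted ltn (sort leq js).
  by rewrite ltn_sorted_uniq_leq (perm_uniq P) u sort_sorted //; exact: leq_total.
have := @sorted_sum _ 0 _ st.
rewrite size_sort (perm_big _ P) expn0 mul1n addn1; apply.
by apply/allP.
Qed.

Theorem mainTheorem3 (n : nat) :
  (2 <= n)%N ->
  (1 < cullen n)%N -> ~~ prime (cullen n) ->
  (totient (cullen n) %| (cullen n).-1)%N ->
  (INR (size (primes (cullen n))) < 1 + (24 / 10) * ln (INR n))%R.
Proof.
move=> n2 N1 _ Hdvd.
set N := cullen n in N1 Hdvd *.
have n0 : 0 < n by apply: leq_trans n2.
have N0 : 0 < N by apply: ltnW.
have NP : N.-1 = n * 2 ^ n by rewrite /N cullenE addn1.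
have Nodd : odd N.
  by rewrite /N cullenE addn1 /= oddM oddX orbF eqn0Ngt n0 andbF.
set P := primes N.
have Pp : forall p, p \in P -> prime p /\ 2 < p.
  move=> p; rewrite mem_primes => /and3P [pp _ pN]; split => //.
  apply: (odd_prime_gt2 _ pp); have := dvdn_odd pN Nodd. done.
have Hprod : \prod_(p <- P) p.-1 %| n * 2 ^ n.
  rewrite -NP; apply: dvdn_trans Hdvd; rewrite totientE // big_split /=; exact: dvdn_mulr.
pose e p := logn 2 p.-1.
pose o p := oddp p.-1.
have pos : forall p, p \in P -> 0 < p.-1.
  by move=> p /Pp [_ h]; rewrite -ltnS prednK // ltnW // ltnW.
have Hdec : \prod_(p <- P) p.-1 = \prod_(p <- P) o p * 2 ^ (\sum_(p <- P) e p).
  rewrite expn_sum -big_split; apply: eq_big_seq => p pP /=.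
  by case: (@oddpE _ (pos p pP)).
set D := \prod_(p <- P) o p in Hdec.
set E := \sum_(p <- P) e p in Hdec.
have Dodd : odd D.
  rewrite /D big_seq; apply: (big_ind (fun x => odd x)) => //.
    by move=> x y hx hy; rewrite oddM hx hy.
  by move=> p pP; case: (@oddpE _ (pos p pP)).
have HD2 : D * 2 ^ E %| n * 2 ^ n by rewrite -Hdec.
have Dn : D <= n.
  apply: (@dvdn_leq D n n0).
  have cD : coprime D (2 ^ n) by apply: coprimeXr; rewrite coprime_sym coprime2n.
  rewrite -(Gauss_dvdl _ cD); apply: dvdn_trans HD2; exact: dvdn_mulr.
have En : E < 2 * n.
  have h1 : 2 ^ E <= n * 2 ^ n.
    apply: dvdn_leq; first by rewrite muln_gt0 n0 expn_gt0.
    apply: dvdn_trans HD2; exact: dvdn_mull.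
  have h2 : n * 2 ^ n < 2 ^ (2 * n).
    by rewrite mul2n -addnn expnD ltn_pmul2r ?expn_gt0 // ltn_expl.
  by rewrite -(ltn_exp2l _ _ (isT : 1 < 2)); apply: leq_ltn_trans h2.
pose F := fun p => o p == 1.
have Hs : 3 ^ count (fun p => o p != 1) P <= D.
  rewrite /D; apply: prod3 => p pP; by case: (@oddpE _ (pos p pP)).
have Fp : forall p, p \in P -> F p -> p.-1 = 2 ^ e p /\ e p = 2 ^ logn 2 (e p).
  move=> p pP Fpp.
  have [h1 _] := @oddpE _ (pos p pP).
  have Fpp' : oddp p.-1 = 1 := eqP Fpp.
  have E1 : p.-1 = 2 ^ e p by rewrite /e {1}h1 Fpp' mul1n.
  split => //.
  have [pp p2] := Pp p pP.
  apply: fermat_pow2.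
    rewrite lt0n; apply/negP => /eqP e0; move: E1; rewrite e0 expn0 => h.
    have hp := prednK (ltnW (ltnW p2)); by move: p2; rewrite -hp h.
  by rewrite -E1 addn1 prednK // ltnW // ltnW.
pose js := [seq logn 2 (e p) | p <- [seq p <- P | F p]].
have ujs : uniq js.
  rewrite map_inj_in_uniq; first exact/filter_uniq/primes_uniq.
  move=> p q; rewrite !mem_filter => /andP [Fpp pP] /andP [Fqq qP] h.
  have [E1 E2] := Fp p pP Fpp; have [E3 E4] := Fp q qP Fqq.
  have : p.-1 = q.-1 by rewrite E1 E3 E2 E4 h.
  by move=> h2; rewrite -(prednK (prime_gt0 (Pp p pP).1)) -(prednK (prime_gt0 (Pp q qP).1)) h2.
have sjs : \sum_(y <- js) 2 ^ y <= E.
  rewrite big_map big_filter /E [X in _ <= X](bigID F) /=.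
  apply: (leq_trans _ (leq_addr _ _)).
  rewrite big_seq_cond [X in _ <= X]big_seq_cond; apply: leq_sum => p /andP [pP Fpp].
  by have [_ <-] := Fp p pP Fpp.
have Hr : 2 ^ count F P <= 2 * n.
  have := @uniq_sum _ ujs; rewrite size_map size_filter => h.
  apply: (leq_trans h); apply: leq_ltn_trans En; exact: sjs.
rewrite -(count_predC F P).
apply: real_part.
- by rewrite -INR2; apply: le_INR; apply/leP.
- rewrite -INR2 -(INR_expn 2) INR2.
  have -> : (2 * INR n)%R = INR (2 * n) by rewrite -multE mult_INR.
  by apply: le_INR; apply/leP.
- have -> : (3 ^ count (predC F) P)%R = INR (3 ^ count (predC F) P) by rewrite INR_expn INR3.
  apply: le_INR; apply/leP; exact: leq_trans Hs Dn.
Qed.
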